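(* Let $X\sim p_X$ and $Y\sim p_Y$ be continuous random variables and let $q_{X;m},q_{Y;m}$ be the densities of $\widetilde X_m,\widetilde Y_m$. Then for all $m\in(0,\infty)$, $$\int_{\mathbb R}|q_{X;m}(x)-q_{Y;m}(x)|\,dx\le\int_{\mathbb R}|p_X(x)-p_Y(x)|\,dx .$$ Moreover, for any $\alpha\in(0,\infty)$ and $m\ge4$, if $\mathbb E|X|^\alpha$ exists (is finite), then $$\Pr\big(|X|>\tfrac1{\sqrt m}\big)\,e^{-2\alpha/\sqrt m}\,\mathbb E|X|^\alpha\le\mathbb E|\widetilde X_m|^\alpha\le\Big(\frac2{\sqrt m}\Big)^\alpha+e^{\alpha/\sqrt m}\,\mathbb E|X|^\alpha .$$
   Context: For $m>0$, $[X]_m=\frac1m\lfloor\frac12+mX\rfloor$ with pmf $P_{X;m}[i]=\Pr([X]_m=i/m)=\int_{[(i-0.5)/m,(i+0.5)/m)}p_X$. $\widetilde X_m$ denotes a continuous random variable with density $q_{X;m}(x)=m\,P_{X;m}[i]$ for $x\in[(i-0.5)/m,(i+0.5)/m)$, $i\in\mathbb Z$; similarly $\widetilde Y_m\sim q_{Y;m}$. *)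

(* Defs.v *)
From HB Require Import structures.
From mathcomp Require Import all_boot all_order all_algebra.
From mathcomp Require Import all_classical all_reals all_analysis.
Set Implicit Arguments. Unset Strict Implicit. Unset Printing Implicit Defensive.
Import Order.TTheory GRing.Theory Num.Theory.
Local Open Scope classical_set_scope.
Local Open Scope ring_scope.

(* A probability density on R (w.r.t. Lebesgue measure): the law of a
   continuous random variable X ~ p. *)
Definition is_density (R : realType) (p : R -> R) : Prop :=
  [/\ (forall x, 0 <= p x), measurable_fun setT p &
      (\int[lebesgue_measure]_x (p x)%:E = 1)%E].

Definition qpmf (R : realType) (p : R -> R) (m : R) (i : int) : \bar R :=
  (\int[lebesgue_measure]_(x in `[((i%:~R - 2^-1) / m)%R, ((i%:~R + 2^-1) / m)%R[)
      (p x)%:E)%E.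

Definition qidx (R : realType) (m x : R) : int := Num.floor (2^-1 + m * x).

Definition qdens (R : realType) (p : R -> R) (m : R) (x : R) : \bar R :=
  (m%:E * qpmf p m (qidx m x))%E.

(* Main.v *)
Require Import Defs.
From HB Require Import structures.
From mathcomp Require Import all_boot all_order all_algebra.
From mathcomp Require Import all_classical all_reals all_analysis.
From mathcomp Require Import measurable_realfun.
From mathcomp Require Import ring lra.
Import Order.TTheory GRing.Theory Num.Theory.
Local Open Scope classical_set_scope.
Local Open Scope ring_scope.

Section R1.
Context (R : realType).

Lemma powR_mono {a u v : R} : 0 <= a -> 0 <= u -> u <= v -> u `^ a <= v `^ a.
Proof.
move=> a0 u0 uv; apply: (ge0_ler_powR a0) => //; rewrite nnegrE //.
exact: le_trans uv.
Qed.

Lemma up_pw (a w x y : R) : 0 < a -> 0 < w -> w <= 2^-1 -> `|x - y| < w * w ->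
  `|y| `^ a <= (2 * w) `^ a + expR (a * w) * `|x| `^ a.
Proof.
move=> a0 w0 w2 hxy.
have hv : `|y| <= `|x| + w * w.
  have := lerB_dist y x; rewrite distrC; lra.
have hx0 := normr_ge0 x; have hy0 := normr_ge0 y.
case: (leP `|x| w) => hx.
  have hy : `|y| <= 2 * w by nra.
  apply: (le_trans (powR_mono (ltW a0) hy0 hy)).
  by rewrite lerDl mulr_ge0 ?powR_ge0 // ltW // expR_gt0.
have hy : `|y| <= `|x| * (1 + w) by nra.
apply: (le_trans (powR_mono (ltW a0) hy0 hy)).
have e : (`|x| * (1 + w)) `^ a = `|x| `^ a * (1 + w) `^ a.
  by apply: powRM => //; lra.
rewrite e.
apply: (@le_trans _ _ (expR (a * w) * `|x| `^ a)); last first.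
  by rewrite addrC lerDl powR_ge0.
rewrite mulrC ler_wpM2r ?powR_ge0 // mulrC expRM.
apply: powR_mono; [exact: ltW | lra |].
by have := expR_ge1Dx w; lra.
Qed.

Lemma lo_pw (a w x y : R) : 0 < a -> 0 < w -> w <= 2^-1 -> `|x - y| < w * w ->
  w < `|x| -> expR (- (2 * a) * w) * `|x| `^ a <= `|y| `^ a.
Proof.
move=> a0 w0 w2 hxy hx.
have hv : `|x| - w * w <= `|y|.
  have := lerB_dist x y; lra.
have hx0 := normr_ge0 x; have hy0 := normr_ge0 y.
have hy : `|x| * (1 - w) <= `|y| by nra.
have he : expR (- (2 * w)) <= 1 - w.
  rewrite expRN.
  have h1 := expR_ge1Dx (2 * w).
  have h2 : 0 < 1 + 2 * w by lra.
  apply: (@le_trans _ _ ((1 + 2 * w)^-1)).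
    by rewrite lef_pV2 ?posrE ?expR_gt0.
  rewrite -[X in X <= _]mul1r ler_pdivrMr //; nra.
apply: (le_trans _ (powR_mono (ltW a0) _ hy)); last by apply: mulr_ge0; lra.
have e : (`|x| * (1 - w)) `^ a = `|x| `^ a * (1 - w) `^ a.
  by apply: powRM => //; lra.
rewrite e mulrC ler_wpM2l ?powR_ge0 //.
have -> : - (2 * a) * w = - (2 * w) * a by ring.
rewrite expRM; apply: powR_mono; [exact: ltW | exact: ltW (expR_gt0 _) | exact: he].
Qed.

End R1.


Lemma key_ineq (R : realType) (a b u v : \bar R) (s : R) :
  a \is a fin_num -> b \is a fin_num -> u \is a fin_num -> v \is a fin_num ->
  (0 <= a)%E -> (0 <= b)%E -> (0 <= u)%E -> (0 <= v)%E -> 0 <= s ->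
  (a + b = 1)%E -> (v <= s%:E * b)%E -> (s%:E * a <= u)%E -> (a * (u + v) <= u)%E.
Proof.
move: a b u v => [a| |] [b| |] [u| |] [v| |] //= _ _ _ _.
move=> a0 b0 u0 v0 s0 hab h1 h2.
rewrite !lee_fin in a0 b0 u0 v0.
rewrite -!EFinM !lee_fin in h1 h2.
move: hab; rewrite -EFinD => -[hab].
rewrite -EFinD -EFinM lee_fin.
have h3 : a * v <= a * (s * b) by apply: ler_wpM2l.
have h4 : b * (s * a) <= b * u by apply: ler_wpM2l.
nra.
Qed.

Section Q.
Context (R : realType) (m : R) (hm : 0 < m).
Local Notation mu := (@lebesgue_measure R).

Definition cell (i : int) : set R := [set x | qidx m x = i].

Lemma cellE i : [set` `[((i%:~R - 2^-1) / m), ((i%:~R + 2^-1) / m)[] = cell i.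
Proof.
apply/seteqP; split => x /=; rewrite in_itv /= /cell /qidx.
  move=> /andP[h1 h2]; apply/eqP; rewrite floor_eq intrD.
  rewrite ler_pdivrMr // in h1; rewrite ltr_pdivlMr // in h2.
  apply/andP; split; lra.
move/eqP; rewrite floor_eq intrD => /andP[h1 h2].
rewrite ler_pdivrMr // ltr_pdivlMr //; apply/andP; split; lra.
Qed.

Lemma cell_meas i : measurable (cell i).
Proof. by rewrite -cellE; exact: measurable_itv. Qed.

Definition S : set (R * R) := [set z | qidx m z.1 = qidx m z.2].

Lemma S_meas : measurable S.
Proof.
have -> : S = \bigcup_(i : int) (cell i `*` cell i).
  apply/seteqP; split => [[x y]|[x y]]; rewrite /S /=.
    by move=> h; exists (qidx m y) => //; split.
  by move=> [i _ [h1 h2]]; rewrite /cell /= in h1 h2; rewrite h1 h2.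
apply: countable_bigcupT_measurable => // i.
by apply: measurableX; exact: cell_meas.
Qed.

Lemma mu_cell i : mu (cell i) = (m^-1)%:E.
Proof.
rewrite -cellE lebesgue_measure_itv /= lte_fin ltr_pM2r ?invr_gt0 //.
have -> : i%:~R - 2^-1 < i%:~R + 2^-1 :> R by lra.
rewrite -EFinD; congr EFin.
by field; rewrite gt_eqF.
Qed.


Definition K (z : R * R) : \bar R := ((\1_S z : R))%:E.

Lemma K_meas : measurable_fun setT K.
Proof. by apply/measurable_EFinP; apply: measurable_indic; exact: S_meas. Qed.

Lemma K_ge0 z : (0 <= K z)%E.
Proof. by rewrite lee_fin indicE. Qed.

Lemma int_indic (f : R -> \bar R) (A : set R) : measurable A ->
  (\int[mu]_x (f x * (\1_A x : R)%:E) = \int[mu]_(x in A) f x)%E.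
Proof.
by move=> mA; rewrite [RHS]integral_mkcond epatch_indic.
Qed.

Lemma int_Kx (f : R -> \bar R) y :
  (\int[mu]_x (f x * K (x, y)) = \int[mu]_(x in cell (qidx m y)) f x)%E.
Proof.
rewrite -(int_indic _ _ (cell_meas _)).
by apply: eq_integral => x _; rewrite /K.
Qed.

Lemma int_Ky (f : R -> \bar R) x :
  (\int[mu]_y (f y * K (x, y)) = \int[mu]_(y in cell (qidx m x)) f y)%E.
Proof.
rewrite -(int_indic _ _ (cell_meas _)).
apply: eq_integral => y _; rewrite /K !indicE; congr (_ * (_%:R)%:E)%E.
congr nat_of_bool; apply/idP/idP => /set_mem h; apply/mem_set; move: h; by rewrite /S /cell /= => ->.
Qed.

Lemma qdensE p y : qdens p m y = (m%:E * \int[mu]_x ((p x)%:E * K (x, y)))%E.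
Proof. by rewrite int_Kx /qdens /qpmf cellE. Qed.


Lemma Kx_meas y : measurable_fun setT (fun x => K (x, y)).
Proof. exact: (measurable_fun_pair1 y K_meas). Qed.

Lemma Ky_meas x : measurable_fun setT (fun y => K (x, y)).
Proof. exact: (measurable_fun_pair2 x K_meas). Qed.

Lemma Exch (F p : R -> R) : measurable_fun setT F -> (forall y, 0 <= F y) ->
  measurable_fun setT p -> (forall x, 0 <= p x) ->
  (\int[mu]_y ((F y)%:E * qdens p m y) =
   \int[mu]_x ((p x)%:E * (m%:E * \int[mu]_y ((F y)%:E * K (x, y)))))%E.
Proof.
move=> mF F0 mp p0.
have m0 : (0 <= m%:E)%E by rewrite lee_fin ltW.
pose f := (fun z : R * R => (F z.2)%:E * (m%:E * ((p z.1)%:E * K z)))%E.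
have mf : measurable_fun setT f.
  apply: emeasurable_funM.
    by apply/measurable_EFinP; apply: measurableT_comp mF measurable_snd.
  apply: measurable_funeM; apply: emeasurable_funM; last exact: K_meas.
  by apply/measurable_EFinP; apply: measurableT_comp mp measurable_fst.
have f0 z : (0 <= f z)%E.
  by rewrite /f !mule_ge0 // ?lee_fin // K_ge0.
transitivity (\int[mu]_y \int[mu]_x f (x, y))%E.
  apply: eq_integral => y _; rewrite qdensE muleA -ge0_integralZl //.
  - by apply: eq_integral => x _; rewrite /f /= [RHS]muleA.
  - apply: (@emeasurable_funM _ _ _ _ (fun x => (p x)%:E) (fun x => K (x, y))); last exact: Kx_meas.
    exact/measurable_EFinP.
  - by move=> x _; rewrite mule_ge0 ?lee_fin // K_ge0.
  - by rewrite mule_ge0 // lee_fin.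
rewrite -(@fubini_tonelli _ _ _ _ _ mu mu f) //.
apply: eq_integral => x _.
rewrite muleA -ge0_integralZl //.
- apply: eq_integral => y _; rewrite /f /=.
  by rewrite /K -!EFinM; congr EFin; ring.
- apply: emeasurable_funM; last exact: Ky_meas.
  exact/measurable_EFinP.
- by move=> y _; rewrite mule_ge0 ?lee_fin // K_ge0.
- by rewrite mule_ge0 // lee_fin.
Qed.


Lemma A_le (F : R -> R) x B : measurable_fun setT F -> (forall y, 0 <= F y) ->
  (forall y, qidx m y = qidx m x -> F y <= B) ->
  (m%:E * \int[mu]_y ((F y)%:E * K (x, y)) <= B%:E)%E.
Proof.
move=> mF F0 FB; rewrite int_Ky.
have -> : B%:E = (m%:E * (B%:E * mu (cell (qidx m x))))%E.
  by rewrite mu_cell -!EFinM; congr EFin; field; rewrite gt_eqF.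
apply: lee_wpmul2l; first by rewrite lee_fin ltW.
rewrite -integral_cst; last exact: cell_meas.
apply: ge0_le_integral => //; first exact: cell_meas.
all: try (by move=> y _; rewrite lee_fin).
all: try (by apply/measurable_EFinP; apply: measurable_funS mF).
all: try (by move=> y Hy; rewrite lee_fin; apply: FB).
Qed.

Lemma A_ge (F : R -> R) x B : measurable_fun setT F -> 0 <= B ->
  (forall y, qidx m y = qidx m x -> B <= F y) ->
  (B%:E <= m%:E * \int[mu]_y ((F y)%:E * K (x, y)))%E.
Proof.
move=> mF B0 FB; rewrite int_Ky.
have -> : B%:E = (m%:E * (B%:E * mu (cell (qidx m x))))%E.
  by rewrite mu_cell -!EFinM; congr EFin; field; rewrite gt_eqF.
apply: lee_wpmul2l; first by rewrite lee_fin ltW.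
rewrite -integral_cst; last exact: cell_meas.
apply: ge0_le_integral => //; first exact: cell_meas.
all: try (by move=> y _; rewrite lee_fin).
all: try (by apply/measurable_EFinP; apply: measurable_funS mF).
all: try (by move=> y Hy; rewrite lee_fin; apply: FB).
Qed.

Lemma same_cell x y : qidx m y = qidx m x -> `|x - y| < m^-1.
Proof.
move=> h.
have hx : cell (qidx m x) x by [].
have hy : cell (qidx m x) y by [].
rewrite -cellE /= !in_itv /= in hx hy.
move: hx hy => /andP[x1 x2] /andP[y1 y2].
rewrite ler_pdivrMr // ltr_pdivlMr // in x1 x2.
rewrite ler_pdivrMr // ltr_pdivlMr // in y1 y2.
rewrite ltr_norml; apply/andP; split.
  rewrite -(ltr_pM2r hm) mulNr mulVf ?gt_eqF //; lra.
rewrite -(ltr_pM2r hm) mulVf ?gt_eqF //; lra.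
Qed.


Lemma mK1 x : (m%:E * \int[mu]_y K (x, y) = 1)%E.
Proof.
have -> : (\int[mu]_y K (x, y) = \int[mu]_y ((cst 1 y)%:E * K (x, y)))%E.
  by apply: eq_integral => y _; rewrite mul1e.
apply/eqP; rewrite eq_le; apply/andP; split.
  by apply: A_le => //; exact: measurable_cst.
by apply: A_ge => //; exact: measurable_cst.
Qed.

Lemma dens_int p : is_density p -> mu.-integrable setT (EFin \o p).
Proof.
move=> [p0 mp ip]; apply/integrableP; split; first exact/measurable_EFinP.
rewrite [X in (X < _)%E](_ : _ = (\int[mu]_x (p x)%:E)%E); first by rewrite ip ltry.
apply: eq_integral => x _ /=.
by rewrite ger0_norm.
Qed.

Lemma qdens_meas (p : R -> R) : measurable_fun setT p -> (forall x, 0 <= p x) ->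
  measurable_fun setT (qdens p m).
Proof.
move=> mp p0.
have -> : qdens p m = (fun y => m%:E * \int[mu]_x ((p x)%:E * K (x, y)))%E.
  by apply/funext => y; rewrite qdensE.
apply: measurable_funeM.
apply: (@measurable_fun_fubini_tonelli_G _ _ _ _ _ mu (fun z : R * R => (p z.1)%:E * K z)%E).
- apply: emeasurable_funM; last exact: K_meas.
  by apply/measurable_EFinP; apply: measurableT_comp mp measurable_fst.
- by move=> z; rewrite mule_ge0 ?lee_fin ?K_ge0.
Qed.


Lemma pw1 (pX pY : R -> R) y : is_density pX -> is_density pY ->
  (`|qdens pX m y - qdens pY m y| <=
   m%:E * \int[mu]_x (`|(pX x)%:E - (pY x)%:E| * K (x, y)))%E.
Proof.
move=> hX hY; rewrite !qdensE !int_Kx.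
have mC := cell_meas (qidx m y).
have iX : mu.-integrable (cell (qidx m y)) (EFin \o pX).
  by apply: (@integrableS _ _ _ mu setT) => //; exact: dens_int.
have iY : mu.-integrable (cell (qidx m y)) (EFin \o pY).
  by apply: (@integrableS _ _ _ mu setT) => //; exact: dens_int.
rewrite -muleBr //; last first.
  by apply: fin_num_adde_defl; rewrite fin_numN; exact: integrable_fin_num iY.
rewrite -integralB_EFin // abseM (@gee0_abs _ m%:E); last by rewrite lee_fin ltW.
apply: lee_wpmul2l; first by rewrite lee_fin ltW.
apply: le_abse_integral => //.
apply: emeasurable_funB; apply/measurable_EFinP.
  by case: hX => _ mp _; apply: measurable_funS mp.
by case: hY => _ mp _; apply: measurable_funS mp.
Qed.


Lemma part1 (pX pY : R -> R) : is_density pX -> is_density pY ->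
  (\int[mu]_x `|qdens pX m x - qdens pY m x| <=
   \int[mu]_x `|(pX x)%:E - (pY x)%:E|)%E.
Proof.
move=> hX hY; have [pX0 mpX _] := hX; have [pY0 mpY _] := hY.
have m0 : (0 <= m%:E)%E by rewrite lee_fin ltW.
pose d := fun x => `|(pX x)%:E - (pY x)%:E|%E.
have md : measurable_fun setT d.
  apply: measurableT_comp => //; apply: emeasurable_funB; exact/measurable_EFinP.
pose g := fun z : R * R => (m%:E * (d z.1 * K z))%E.
have mg : measurable_fun setT g.
  apply: measurable_funeM; apply: emeasurable_funM; last exact: K_meas.
  exact: measurableT_comp md measurable_fst.
have g0 z : (0 <= g z)%E by rewrite /g /d !mule_ge0 ?K_ge0 ?abse_ge0.
apply: (@le_trans _ _ (\int[mu]_y \int[mu]_x g (x, y))%E).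
  apply: ge0_le_integral => //.
  - apply: measurableT_comp => //; apply: emeasurable_funB; exact: qdens_meas.
  - exact: (@measurable_fun_fubini_tonelli_G _ _ _ _ _ mu g).
  - move=> y _; have h := pw1 _ _ y hX hY; apply: (le_trans h).
    rewrite -ge0_integralZl //.
    + apply: emeasurable_funM; last exact: Kx_meas.
      exact: md.
    + by move=> x _; rewrite mule_ge0 ?K_ge0.
rewrite -(@fubini_tonelli _ _ _ _ _ mu mu g) //.
rewrite le_eqVlt; apply/orP; left; apply/eqP; apply: eq_integral => x _.
transitivity (\int[mu]_y ((m%:E * d x) * K (x, y)))%E.
  by apply: eq_integral => y _; rewrite /g /= muleA.
rewrite ge0_integralZl //.
- by rewrite [(m%:E * d x)%E]muleC -muleA mK1 mule1.
- exact: Ky_meas.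
- by move=> y _; rewrite K_ge0.
- by rewrite mule_ge0 ?abse_ge0.
Qed.


Lemma Aint_meas (F p : R -> R) : measurable_fun setT F -> (forall y, 0 <= F y) ->
  measurable_fun setT p ->
  measurable_fun setT (fun x => (p x)%:E * (m%:E * \int[mu]_y ((F y)%:E * K (x, y))))%E.
Proof.
move=> mF F0 mp; apply: emeasurable_funM; first exact/measurable_EFinP.
apply: measurable_funeM.
apply: (@measurable_fun_fubini_tonelli_F _ _ _ _ _ mu (fun z : R * R => (F z.2)%:E * K z)%E).
- apply: emeasurable_funM; last exact: K_meas.
  by apply/measurable_EFinP; apply: measurableT_comp mF measurable_snd.
- by move=> z; rewrite mule_ge0 ?lee_fin ?K_ge0.
Qed.

Lemma sqrt_facts : 4 <= m ->
  0 < (Num.sqrt m)^-1 /\ (Num.sqrt m)^-1 <= 2^-1 /\ m^-1 = (Num.sqrt m)^-1 * (Num.sqrt m)^-1.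
Proof.
move=> m4.
have s2 : 2 <= Num.sqrt m.
  have e4 : (4 : R) = 2 ^+ 2 by rewrite expr2; lra.
  have -> : (2 : R) = Num.sqrt 4 by rewrite e4 sqrtr_sqr ger0_norm.
  by rewrite ler_sqrt //; lra.
split; first by rewrite invr_gt0; lra.
split; first by rewrite lef_pV2 ?posrE //; lra.
by rewrite -invfM -expr2 sqr_sqrtr //; lra.
Qed.


Lemma part2_up (p : R -> R) (alpha : R) : is_density p -> 0 < alpha -> 4 <= m ->
  (\int[mu]_x ((`|x| `^ alpha)%:E * qdens p m x) <=
   ((2 / Num.sqrt m) `^ alpha)%:E + (expR (alpha / Num.sqrt m))%:E *
     \int[mu]_x ((`|x| `^ alpha * p x))%:E)%E.
Proof.
move=> [p0 mp ip] a0 m4.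
have [w0 [w2 mw]] := sqrt_facts m4.
pose F := fun y : R => `|y| `^ alpha.
have mF : measurable_fun setT F.
  have -> : F = (@powR R ^~ alpha) \o (fun y : R => `|y|) by [].
  apply: measurableT_comp; [exact: measurable_powR | exact: normr_measurable].
have F0 y : 0 <= F y by exact: powR_ge0.
rewrite (Exch F p mF F0 mp p0).
set c1 := (2 / Num.sqrt m) `^ alpha; set c2 := expR (alpha / Num.sqrt m).
have c10 : 0 <= c1 by exact: powR_ge0.
have c20 : 0 <= c2 by exact: ltW (expR_gt0 _).
apply: (@le_trans _ _ (\int[mu]_x (c1%:E * (p x)%:E + c2%:E * (F x * p x)%:E))%E).
  apply: ge0_le_integral => //.
  - move=> x _; rewrite mule_ge0 ?lee_fin //; apply: mule_ge0; first by rewrite lee_fin ltW.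
    by apply: integral_ge0 => y _; rewrite mule_ge0 ?lee_fin ?K_ge0.
  - exact: Aint_meas.
  - apply: emeasurable_funD; apply: measurable_funeM; apply/measurable_EFinP => //.
    exact: measurable_funM.
  - move=> x _.
    have -> : (c1%:E * (p x)%:E + c2%:E * (F x * p x)%:E =
               (p x)%:E * (c1 + c2 * F x)%:E)%E.
      by rewrite -!EFinM -EFinD; congr EFin; ring.
    apply: lee_wpmul2l; first by rewrite lee_fin.
    apply: A_le => // y hy; rewrite /F /c1 /c2.
    apply: up_pw => //; by rewrite -mw distrC same_cell.
rewrite ge0_integralD //.
- rewrite (@ge0_integralZl_EFin _ _ _ mu setT measurableT (fun x => (p x)%:E)) //; last 2 first.
    by move=> x _; rewrite lee_fin.
    exact/measurable_EFinP.
  rewrite (@ge0_integralZl_EFin _ _ _ mu setT measurableT (fun x => (F x * p x)%:E)) //; last 2 first.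
    by move=> x _; rewrite lee_fin mulr_ge0.
    by apply/measurable_EFinP; exact: measurable_funM.
  by rewrite ip mule1.
- by move=> x _; rewrite mule_ge0 ?lee_fin.
- by apply: measurable_funeM; exact/measurable_EFinP.
- by move=> x _; rewrite mule_ge0 ?lee_fin ?mulr_ge0.
- by apply: measurable_funeM; apply/measurable_EFinP; exact: measurable_funM.
Qed.


Lemma part2_lo (p : R -> R) (alpha : R) : is_density p -> 0 < alpha -> 4 <= m ->
  (\int[mu]_x ((`|x| `^ alpha) * p x)%:E < +oo)%E ->
  ((\int[mu]_(x in [set x : R | (1 / Num.sqrt m < `|x|)%R]) (p x)%:E) *
     (expR (- (2 * alpha) / Num.sqrt m))%:E *
     (\int[mu]_x ((`|x| `^ alpha) * p x)%:E) <=
   \int[mu]_x ((`|x| `^ alpha)%:E * qdens p m x))%E.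
Proof.
move=> [p0 mp ip] a0 m4 EXoo.
have [w0 [w2 mw]] := sqrt_facts m4.
pose F := fun y : R => `|y| `^ alpha.
have mF : measurable_fun setT F.
  have -> : F = (@powR R ^~ alpha) \o (fun y : R => `|y|) by [].
  apply: measurableT_comp; [exact: measurable_powR | exact: normr_measurable].
have F0 y : 0 <= F y by exact: powR_ge0.
have mFp : measurable_fun setT (fun x => (F x * p x)%:E).
  by apply/measurable_EFinP; exact: measurable_funM.
have Fp0 x : (0 <= (F x * p x)%:E)%E by rewrite lee_fin mulr_ge0.
have mpE : measurable_fun setT (fun x => (p x)%:E) by exact/measurable_EFinP.
set T := [set x : R | (1 / Num.sqrt m < `|x|)%R].
have mT : measurable T.
  have h : measurable_fun setT (fun x : R => 1 / Num.sqrt m < `|x|).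
    by apply: measurable_fun_ltr; [exact: measurable_cst | exact: normr_measurable].
  by have := h measurableT [set true] I; rewrite setTI.
have Tw x : T x = ((Num.sqrt m)^-1 < `|x|) by rewrite /T /= mul1r.
set c := expR (- (2 * alpha) / Num.sqrt m).
have c0 : 0 <= c by exact: ltW (expR_gt0 _).
set IT := (\int[mu]_(x in T) (F x * p x)%:E)%E.
have step1 : (c%:E * IT <= \int[mu]_x ((`|x| `^ alpha)%:E * qdens p m x))%E.
  rewrite (Exch F p mF F0 mp p0).
  apply: (@le_trans _ _ (\int[mu]_x ((p x)%:E * (c * F x * (\1_T x : R))%:E))%E).
    rewrite /IT -int_indic // -ge0_integralZl_EFin //; last 2 first.
      by move=> x _; rewrite mule_ge0 // lee_fin indicE.
      by apply: emeasurable_funM => //; apply/measurable_EFinP; exact: measurable_indic.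
    rewrite le_eqVlt; apply/orP; left; apply/eqP; apply: eq_integral => x _.
    by rewrite -!EFinM; congr EFin; ring.
  apply: ge0_le_integral => //.
  - by move=> x _; rewrite lee_fin mulr_ge0 // mulr_ge0 ?mulr_ge0 // indicE.
  - apply/measurable_EFinP; apply: measurable_funM => //.
    apply: measurable_funM; last exact: measurable_indic.
    exact: measurable_funM.
  - exact: Aint_meas.
  - move=> x _; apply: lee_wpmul2l; first by rewrite lee_fin.
    rewrite indicE; case: (boolP (x \in T)) => hx.
      rewrite mulr1; apply: A_ge => //; first exact: mulr_ge0.
      move=> y hy; rewrite /F /c.
      apply: lo_pw => //; first by rewrite -mw same_cell.
      by rewrite -Tw; exact: set_mem hx.
    rewrite mulr0; apply: mule_ge0; first by rewrite lee_fin ltW.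
    by apply: integral_ge0 => y _; rewrite mule_ge0 ?lee_fin ?K_ge0.
set Pr := (\int[mu]_(x in T) (p x)%:E)%E.
set EX := (\int[mu]_x ((`|x| `^ alpha) * p x)%:E)%E.
set Q := (\int[mu]_(x in ~` T) (p x)%:E)%E.
set IC := (\int[mu]_(x in ~` T) (F x * p x)%:E)%E.
have mCT : measurable (~` T) by exact: measurableC.
have dTC : [disjoint T & ~` T] by rewrite disj_set2E setICr.
have hPQ : (Pr + Q = 1)%E.
  rewrite -ip -(setUCr T) ge0_integral_setU //.
  - by rewrite setUCr.
  - by move=> x _; rewrite lee_fin.
have hEX : EX = (IT + IC)%E.
  rewrite /EX -(setUCr T) ge0_integral_setU //.
  - by rewrite setUCr.
  - by move=> x _; rewrite lee_fin mulr_ge0 ?powR_ge0.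
have Pr0 : (0 <= Pr)%E by apply: integral_ge0 => x _; rewrite lee_fin.
have Q0 : (0 <= Q)%E by apply: integral_ge0 => x _; rewrite lee_fin.
have IT0 : (0 <= IT)%E by apply: integral_ge0.
have IC0 : (0 <= IC)%E by apply: integral_ge0.
have hIC : (IC <= ((Num.sqrt m)^-1 `^ alpha)%:E * Q)%E.
  rewrite /Q -ge0_integralZl_EFin //; last 2 first.
  - by move=> x _; rewrite lee_fin.
  - exact: measurable_funS mpE.
  apply: ge0_le_integral => //.
  - exact: measurable_funS mFp.
  - by apply/measurable_EFinP; apply: measurable_funM => //; exact: measurable_funS mp.
  - move=> x hx; rewrite -EFinM lee_fin ler_wpM2r //.
    apply: powR_mono; [exact: ltW | exact: normr_ge0 |].
    by rewrite leNgt; apply/negP => h; apply: hx; rewrite Tw.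
have hIT : (((Num.sqrt m)^-1 `^ alpha)%:E * Pr <= IT)%E.
  rewrite /Pr -ge0_integralZl_EFin //; last 2 first.
  - by move=> x _; rewrite lee_fin.
  - exact: measurable_funS mpE.
  apply: ge0_le_integral => //.
  - by move=> x _; rewrite lee_fin mulr_ge0 ?powR_ge0.
  - by apply/measurable_EFinP; apply: measurable_funM => //; exact: measurable_funS mp.
  - exact: measurable_funS mFp.
  - move=> x hx; rewrite -EFinM lee_fin ler_wpM2r //.
    apply: powR_mono; [exact: ltW | exact: ltW |].
    by apply: ltW; move: hx; rewrite Tw.
have fin_le (e : \bar R) (b : \bar R) : (0 <= e)%E -> (e <= b)%E -> (b < +oo)%E -> e \is a fin_num.
  by move=> e0 eb bo; rewrite ge0_fin_numE //; exact: le_lt_trans eb bo.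
have fPr : Pr \is a fin_num.
  by apply: (fin_le _ (Pr + Q)%E) => //; [exact: leeDl | rewrite hPQ ltry].
have fQ : Q \is a fin_num.
  by apply: (fin_le _ (Pr + Q)%E) => //; [exact: leeDr | rewrite hPQ ltry].
have fIT : IT \is a fin_num.
  by apply: (fin_le _ EX) => //; rewrite hEX; exact: leeDl.
have fIC : IC \is a fin_num.
  by apply: (fin_le _ EX) => //; rewrite hEX; exact: leeDr.
have key : (Pr * EX <= IT)%E.
  rewrite hEX; apply: (@key_ineq R Pr Q IT IC ((Num.sqrt m)^-1 `^ alpha)) => //; exact: powR_ge0.
apply: le_trans step1.
rewrite muleAC muleC; apply: lee_wpmul2l => //; by rewrite lee_fin.
Qed.

End Q.

Theorem mainTheorem12 (R : realType) (pX pY : R -> R) :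
  is_density pX -> is_density pY ->
  (forall m : R, 0 < m ->
     (\int[lebesgue_measure]_x `|qdens pX m x - qdens pY m x|
       <= \int[lebesgue_measure]_x `|(pX x)%:E - (pY x)%:E|)%E) /\
  (forall (alpha m : R), 0 < alpha -> 4 <= m ->
     (\int[lebesgue_measure]_x ((`|x| `^ alpha) * pX x)%:E < +oo)%E ->
     let EX := (\int[lebesgue_measure]_x ((`|x| `^ alpha) * pX x)%:E)%E in
     let EXt := (\int[lebesgue_measure]_x ((`|x| `^ alpha)%:E * qdens pX m x))%E in
     let Pr := (\int[lebesgue_measure]_(x in [set x : R | (1 / Num.sqrt m < `|x|)%R])
                  (pX x)%:E)%E in
     (Pr * (expR (- (2 * alpha) / Num.sqrt m))%:E * EX <= EXt)%E /\
     (EXt <= ((2 / Num.sqrt m) `^ alpha)%:E + (expR (alpha / Num.sqrt m))%:E * EX)%E).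
Proof.
move=> hX hY; split.
  by move=> m m0; exact: part1.
move=> alpha m a0 m4 EXoo EX EXt Pr.
have hm : 0 < m by lra.
split.
  exact: (@part2_lo R m hm pX alpha hX a0 m4 EXoo).
exact: (@part2_up R m hm pX alpha hX a0 m4).
Qed.
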